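(* Let $(\mathbf f,\mathbf g),(\mathbf f',\mathbf g'),(\mathbf f^*,\mathbf g^* )$ be models with $(\mathbf f,\mathbf g)\sim_L(\mathbf f^*,\mathbf g^* )$. Fix labels $y_1,\dots,y_M\in\mathcal Y$ and inputs $x_1,\dots,x_M\in\mathcal X$, and let $\mathbf L,\mathbf L^*,\mathbf L'$ be the matrices with columns $\mathbf g_0(y_i)$, $\mathbf g^*_0(y_i)$, $\mathbf g'_0(y_i)$ ($i=1,\dots,M$) and $\mathbf N,\mathbf N^*,\mathbf N'$ the matrices with columns $\mathbf f_0(x_i)$, $\mathbf f^*_0(x_i)$, $\mathbf f'_0(x_i)$. With $x\sim p_{\mathcal D}$ and $y$ uniform on $\mathcal Y$, and assuming the quantities below are defined (all components of finite positive variance), $$d_{\mathrm{SVD}}(\mathbf L^\top\mathbf f(x),\mathbf L'^\top\mathbf f'(x))=d_{\mathrm{SVD}}(\mathbf L^{*\top}\mathbf f^*(x),\mathbf L'^\top\mathbf f'(x)),$$ $$d_{\mathrm{SVD}}(\mathbf N^\top\mathbf g(y),\mathbf N'^\top\mathbf g'(y))=d_{\mathrm{SVD}}(\mathbf N^{*\top}\mathbf g^*(y),\mathbf N'^\top\mathbf g'(y)).$$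
   Context: Let $\mathcal X$ be a set of inputs and $\mathcal Y$ a finite set of labels; fix $M\ge1$ and a probability distribution $p_{\mathcal D}$ on $\mathcal X$. A model is a pair $(\mathbf f,\mathbf g)$ of functions $\mathbf f:\mathcal X\to\mathbb R^M$, $\mathbf g:\mathcal Y\to\mathbb R^M$ defining $p_{\mathbf f,\mathbf g}(y\mid x)=\exp(\mathbf f(x)^\top\mathbf g(y))/\sum_{y'\in\mathcal Y}\exp(\mathbf f(x)^\top\mathbf g(y'))$. With pivot input $x_0$ and pivot label $y_0$, write $\mathbf f_0(x)=\mathbf f(x)-\mathbf f(x_0)$, $\mathbf g_0(y)=\mathbf g(y)-\mathbf g(y_0)$ (similarly for other models). The relation $(\mathbf f,\mathbf g)\sim_L(\mathbf f^*,\mathbf g^* )$ holds iff there is an invertible $\mathbf A\in\mathbb R^{M\times M}$ with $\mathbf f(x)=\mathbf A\mathbf f^*(x)$ for all $x$ and $\mathbf g_0(y)=\mathbf A^{-\top}\mathbf g^*_0(y)$ for all $y$. For $M$-dimensional random vectors $\mathbf z,\mathbf w$ (jointly distributed, components with finite positive variance), let $\mathbf z',\mathbf w'$ be the standardized vectors $z'_i=(z_i-\mathbb E[z_i])/\operatorname{std}(z_i)$, $w'_i=(w_i-\mathbb E[w_i])/\operatorname{std}(w_i)$, and let $\boldsymbol\Sigma_{\mathbf z'\mathbf w'}$ be the cross-covariance matrix with entries $\mathrm{Cov}[z'_i,w'_j]$. Let $\{\mathbf u_i\}_{i=1}^M$, $\{\mathbf v_i\}_{i=1}^M$ be the left and right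 singular vectors of $\boldsymbol\Sigma_{\mathbf z'\mathbf w'}$. Define $m_{\mathrm{SVD}}(\mathbf z,\mathbf w)=\frac1M\sum_{i=1}^M\mathrm{Cov}[\mathbf u_i^\top\mathbf z',\mathbf v_i^\top\mathbf w']$ (equivalently, $\frac1M$ times the sum of the singular values of $\boldsymbol\Sigma_{\mathbf z'\mathbf w'}$) and $d_{\mathrm{SVD}}(\mathbf z,\mathbf w)=1-m_{\mathrm{SVD}}(\mathbf z,\mathbf w)$. *)

(* Defs.v *)
From HB Require Import structures.
From mathcomp Require Import all_boot all_order all_algebra.
From mathcomp Require Import all_classical all_reals all_analysis.
Set Implicit Arguments. Unset Strict Implicit. Unset Printing Implicit Defensive.
Import Order.TTheory GRing.Theory Num.Theory.
Local Open Scope ring_scope.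
Local Open Scope classical_set_scope.

Section Defs.
Variable R : realType.

Definition pivot {T : Type} {M : nat} (f : T -> 'cV[R]_M) (t0 : T) : T -> 'cV[R]_M :=
  fun t => f t - f t0.

Definition simL {X Y : Type} {M : nat} (x0 : X) (y0 : Y)
  (f : X -> 'cV[R]_M) (g : Y -> 'cV[R]_M)
  (fs : X -> 'cV[R]_M) (gs : Y -> 'cV[R]_M) : Prop :=
  exists A : 'M[R]_M, A \in unitmx /\
    (forall x, f x = A *m fs x) /\
    (forall y, pivot g y0 y = (invmx A)^T *m pivot gs y0 y).

Definition colmat {T : Type} {M : nat} (h : T -> 'cV[R]_M) (s : 'I_M -> T) : 'M[R]_M :=
  \matrix_(a < M, i < M) h (s i) a 0.

Definition is_svd {M : nat} (A U V : 'M[R]_M) (s : 'rV[R]_M) : Prop :=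
  U^T *m U = 1%:M /\ V^T *m V = 1%:M /\ (forall i, 0 <= s 0 i) /\
  A = U *m diag_mx s *m V^T.

Definition singular_values {M : nat} (A : 'M[R]_M) : 'rV[R]_M :=
  xget 0 [set s | exists U V, is_svd A U V s].

Definition sv_sum {M : nat} (A : 'M[R]_M) : R := \sum_i singular_values A 0 i.

Definition covE {T : Type} (E : (T -> R) -> R) (u v : T -> R) : R :=
  E (fun t => (u t - E u) * (v t - E v)).

Definition stdE {T : Type} (E : (T -> R) -> R) (u : T -> R) : R :=
  Num.sqrt (covE E u u).

Definition comp {T : Type} {M : nat} (z : T -> 'cV[R]_M) (i : 'I_M) : T -> R :=
  fun t => z t i 0.

Definition standardize {T : Type} (E : (T -> R) -> R) (u : T -> R) : T -> R :=
  fun t => (u t - E u) / stdE E u.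

Definition crosscov {T : Type} {M : nat} (E : (T -> R) -> R)
  (z w : T -> 'cV[R]_M) : 'M[R]_M :=
  \matrix_(i < M, j < M)
     covE E (standardize E (comp z i)) (standardize E (comp w j)).

Definition m_SVD {T : Type} {M : nat} (E : (T -> R) -> R) (z w : T -> 'cV[R]_M) : R :=
  (M%:R)^-1 * sv_sum (crosscov E z w).

Definition d_SVD {T : Type} {M : nat} (E : (T -> R) -> R) (z w : T -> 'cV[R]_M) : R :=
  1 - m_SVD E z w.

Definition expP {d} {X : measurableType d} (P : probability X R) (h : X -> R) : R :=
  fine ('E_P[h])%E.

Definition expU (Y : finType) (h : Y -> R) : R :=
  (#|Y|%:R)^-1 * \sum_(y : Y) h y.

Definition finite_pos_var_P {d} {X : measurableType d} (P : probability X R) {M : nat}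
  (z : X -> 'cV[R]_M) : Prop :=
  forall i : 'I_M,
    P.-integrable setT (fun x => (comp z i x)%:E) /\
    P.-integrable setT (fun x => ((comp z i x) ^+ 2)%:E) /\
    0 < covE (expP P) (comp z i) (comp z i).

Definition pos_var_U (Y : finType) {M : nat} (z : Y -> 'cV[R]_M) : Prop :=
  forall i : 'I_M, 0 < covE (@expU Y) (comp z i) (comp z i).

End Defs.

(* Main.v *)
Require Import Defs.
From HB Require Import structures.
From mathcomp Require Import all_boot all_order all_algebra.
From mathcomp Require Import all_classical all_reals all_analysis.
Import Order.TTheory GRing.Theory Num.Theory.
Local Open Scope ring_scope.

Lemma expU_shift (R : realType) (Y : finType) (y0 : Y) (v : Y -> R) (c : R) :
  expU (fun y => v y + c) = expU v + c.
Proof.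
rewrite /expU big_split /= sumr_const mulrDr; congr (_ + _).
rewrite -[c *+ _]mulr_natl mulrA (_ : #|xpredT| = #|Y|) // mulVf ?mul1r //.
by rewrite pnatr_eq0 -lt0n; apply/card_gt0P; exists y0.
Qed.

Lemma std_shift (R : realType) (Y : finType) (y0 : Y) (u v : Y -> R) (c : R) :
  u = (fun y => v y + c) -> standardize (@expU R Y) u = standardize (@expU R Y) v.
Proof.
move=> Hu.
have H : forall y, u y - expU u = v y - expU v.
  by move=> y; rewrite Hu (@expU_shift _ _ y0) opprD addrACA subrr addr0.
have Hc : covE (@expU R Y) u u = covE (@expU R Y) v v.
  by rewrite /covE; congr expU; apply: funext => t; rewrite H.
by rewrite /standardize /stdE Hc; apply: funext => y; rewrite H.
Qed.

Theorem mainTheorem11 (R : realType) (M : nat) (hM : (0 < M)%N)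
  (d : measure_display) (X : measurableType d) (P : probability X R)
  (Y : finType) (x0 : X) (y0 : Y)
  (f f' fs : X -> 'cV[R]_M) (g g' gs : Y -> 'cV[R]_M)
  (hL : simL x0 y0 f g fs gs)
  (ys : 'I_M -> Y) (xs : 'I_M -> X) :
  let L  := colmat (pivot g y0) ys in
  let Ls := colmat (pivot gs y0) ys in
  let L' := colmat (pivot g' y0) ys in
  let N  := colmat (pivot f x0) xs in
  let Ns := colmat (pivot fs x0) xs in
  let N' := colmat (pivot f' x0) xs in
  let zL  := fun x => L^T *m f x in
  let zLs := fun x => Ls^T *m fs x in
  let zL' := fun x => L'^T *m f' x in
  let wN  := fun y => N^T *m g y in
  let wNs := fun y => Ns^T *m gs y in
  let wN' := fun y => N'^T *m g' y in
  finite_pos_var_P P zL -> finite_pos_var_P P zLs -> finite_pos_var_P P zL' ->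
  pos_var_U wN -> pos_var_U wNs -> pos_var_U wN' ->
  d_SVD (expP P) zL zL' = d_SVD (expP P) zLs zL' /\
  d_SVD (@expU R Y) wN wN' = d_SVD (@expU R Y) wNs wN'.
Proof.
move=> L Ls L' N Ns N' zL zLs zL' wN wNs wN' _ _ _ _ _ _.
case: hL => A [hA [hf hg]].
have EL : L = (invmx A)^T *m Ls.
  apply/matrixP => a i; rewrite /L /Ls /colmat.
  move/(congr1 (fun m : 'cV[R]_M => m a 0)): (hg (ys i)).
  rewrite !mxE => ->; apply: eq_bigr => k _; rewrite !mxE //.
have EN : N = A *m Ns.
  apply/matrixP => a i; rewrite /N /Ns /colmat.
  have E1 : pivot f x0 (xs i) = A *m pivot fs x0 (xs i) by rewrite /pivot !hf mulmxBr.
  move/(congr1 (fun m : 'cV[R]_M => m a 0)): E1.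
  rewrite !mxE => ->; apply: eq_bigr => k _; rewrite !mxE //.
split.
  have -> : zL = zLs.
    apply: funext => x; rewrite /zL /zLs EL hf trmx_mul trmxK -mulmxA.
    by rewrite (mulmxA (invmx A)) mulVmx // mul1mx.
  by [].
set c := Ns^T *m (A^T *m g y0 - gs y0).
have Ew : forall y, wN y = wNs y + c.
  move=> y; rewrite /wN /wNs /c EN trmx_mul.
  have -> : g y = pivot g y0 y + g y0 by rewrite /pivot subrK.
  have K : A^T *m (invmx A)^T = 1%:M by rewrite -trmx_mul mulVmx // trmx1.
  rewrite hg -[LHS]mulmxA [in LHS]mulmxDr [in LHS]mulmxA K mul1mx.
  rewrite -mulmxDr; congr (_ *m _); rewrite /pivot.
  by rewrite addrAC -addrA.
rewrite /d_SVD /m_SVD.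
have -> : crosscov (@expU R Y) wN wN' = crosscov (@expU R Y) wNs wN'.
  apply/matrixP => i j; rewrite !mxE; congr covE.
  apply: (@std_shift _ _ y0 _ _ (c i 0)); apply: funext => y.
  by rewrite /Defs.comp Ew mxE.
by [].
Qed.
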